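(* Let $n\ge 1$ and let $\mathcal{F}=(W,R)$ be a finite transitive frame of circumference at most $n$ all of whose final clusters are simple. Let $X_\mathcal{F}$ be the space constructed from $\mathcal{F}$ as described in the context. Then $X_\mathcal{F}$ is openly irresolvable.
   Context: Spaces: a space is $k$-resolvable if it has $k$ pairwise disjoint non-empty dense subsets; resolvable means 2-resolvable; irresolvable means not resolvable; $X$ is openly irresolvable if every non-empty open subspace is irresolvable. $S\subseteq X$ is crowded in $X$ if it has no isolated points as a subspace. Frames: for transitive $(W,R)$, clusters are equivalence classes of $\{(x,y):x=y\text{ or }xRyRx\}$; the cluster of $x$ is degenerate if $x$ is irreflexive, non-degenerate otherwise, and simple if it is a non-degenerate singleton; $CRC'$ for clusters iff $xRy$ for representatives, $CR^\uparrow C'$ iff $CRC'$ and not $C'RC$; $C$ is final if there is no $C'\ne C$ with $CRC'$. The circumference is the supremum of lengths $m$ of cycles $x_1R\cdots Rx_mRx_1$ of distinct points (0 if none). Auxiliary spaces: fix a non-principal ultrafilter $\mathcal{U}$ on $\omega$; $E$ is $\omega$ with open sets $\mathcal{U}\cup\{\emptyset\}$. For $k\ge1$, $X_k$ is $\omega\times\{1,\dots,k\}$ whose open sets are $\emptyset$ and all $\bigcup_{i=1}^k(O_i\times\{i\})$ with each $O_i$ a non-empty open subset of $E$; $S_i=\omega\times\{i\}$. $Y_k$ is the subspace of $X_k$ obtained by removing from $X_k$ the union of all subsets of $X_k$ that are $(k+1)$-resolvable as subspaces, with the $k$-partition $\{Y_k\cap S_i:1\le i\le k\}$ (for $k=1$,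 $Y_1=X_1$, a copy of $E$). Construction of $X_\mathcal{F}$: for each cluster $C$ choose a space $X_C$ partitioned as $\{X_w:w\in C\}$: if $C=\{w\}$ is degenerate, $X_C=X_w=\{w\}$; if $C=\{w_1,\dots,w_k\}$ is non-degenerate, $X_C$ is a copy of $Y_k$ with the cells $Y_k\cap S_1,\dots,Y_k\cap S_k$ labelled $X_{w_1},\dots,X_{w_k}$. The $X_C$ are pairwise disjoint. $X_\mathcal{F}=\bigcup_C X_C$, where $O\subseteq X_\mathcal{F}$ is open iff for every $C$, $O\cap X_C$ is open in $X_C$, and if $O\cap X_C\ne\emptyset$ then $X_{C'}\subseteq O$ for all $C'$ with $CR^\uparrow C'$. *)

(* Defs.v *)
From mathcomp Require Import all_boot.
Set Implicit Arguments.
Unset Strict Implicit.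
Unset Printing Implicit Defensive.

(* A "topology" on a type T is given by its family of open sets [op].
   All notions below are relative to a subspace A of T: the open sets of the
   subspace A are the traces O ∩ A of open sets O. *)
Section Topo.
Variable T : Type.
Variable op : (T -> Prop) -> Prop.

Definition relopen (A V : T -> Prop) : Prop :=
  exists O, op O /\ forall x, V x <-> (O x /\ A x).

Definition dense_in (A D : T -> Prop) : Prop :=
  (forall x, D x -> A x) /\
  forall O, op O -> (exists x, O x /\ A x) -> exists x, O x /\ D x.

Definition kresolvable (k : nat) (A : T -> Prop) : Prop :=
  exists D : nat -> T -> Prop,
    (forall i, i < k -> dense_in A (D i) /\ exists x, D i x) /\
    (forall i j, i < k -> j < k -> i <> j -> forall x, D i x -> D j x -> False).

Definition resolvable (A : T -> Prop) : Prop := kresolvable 2 A.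
Definition irresolvable (A : T -> Prop) : Prop := ~ resolvable A.

Definition openly_irresolvable (X : T -> Prop) : Prop :=
  forall V, relopen X V -> (exists x, V x) -> irresolvable V.
End Topo.

Definition nonprincipal_ultrafilter (U : (nat -> Prop) -> Prop) : Prop :=
  U (fun _ => True) /\
  ~ U (fun _ => False) /\
  (forall A B : nat -> Prop, U A -> (forall x, A x -> B x) -> U B) /\
  (forall A B : nat -> Prop, U A -> U B -> U (fun x => A x /\ B x)) /\
  (forall A : nat -> Prop, U A \/ U (fun x => ~ A x)) /\
  (forall m : nat, ~ U (fun x => x = m)).

Section Aux.
Variable U : (nat -> Prop) -> Prop.

Definition openE (O : nat -> Prop) : Prop := U O \/ (forall x, ~ O x).

(* X_k : carrier omega × {0,...,k-1} (the paper's {1,...,k}, shifted by one),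
   encoded as pairs (m, i) with i < k inside nat * nat. *)
Definition carrierX (k : nat) (p : nat * nat) : Prop := p.2 < k.

Definition openX (k : nat) (O : nat * nat -> Prop) : Prop :=
  (forall p, O p -> carrierX k p) /\
  ((forall p, ~ O p) \/
   (forall i, i < k ->
      openE (fun m => O (m, i)) /\ exists m, O (m, i))).

Definition carrierY (k : nat) (p : nat * nat) : Prop :=
  carrierX k p /\
  ~ (exists A : nat * nat -> Prop,
        (forall q, A q -> carrierX k q) /\ A p /\ kresolvable (openX k) k.+1 A).

Definition openY (k : nat) (V : nat * nat -> Prop) : Prop :=
  relopen (openX k) (carrierY k) V.
End Aux.

Section Frame.
Variable W : finType.
Variable R : rel W.

Definition clust (x y : W) : bool := (x == y) || (R x y && R y x).

Definition csize (x : W) : nat := #|[pred y | clust x y]|.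

Definition circumference_le (n : nat) : Prop :=
  forall s : seq W, s <> [::] -> uniq s -> cycle R s -> size s <= n.

Definition final_cluster (x : W) : Prop := forall y, R x y -> clust x y.

Definition simple_cluster (x : W) : Prop :=
  R x x /\ forall y, clust x y -> y = x.

(* A labelling of each non-degenerate cluster C = {w_1,...,w_k}:
   lab w_i = i-1, i.e. an injection of C onto {0,...,k-1}. *)
Definition cluster_labelling (lab : W -> nat) : Prop :=
  (forall w, R w w -> lab w < csize w) /\
  (forall w y, R w w -> clust w y -> lab w = lab y -> w = y).

Variable U : (nat -> Prop) -> Prop.
Variable lab : W -> nat.

(* The cell X_w is
   - {(w,0)} if the cluster {w} is degenerate;
   - {(w,m) | (m, lab w) ∈ Y_k} if w lies in a non-degenerate cluster of size k
     (so X_C, the union of the X_w for w ∈ C, is a copy of Y_k with cell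
     Y_k ∩ S_i labelled X_{w_i}). *)
Definition carrierXF (p : W * nat) : Prop :=
  if R p.1 p.1 then carrierY U (csize p.1) (p.2, lab p.1) else p.2 = 0.

(* O is open in X_F iff for every cluster C, O ∩ X_C is open in X_C, and if
   O ∩ X_C is non-empty then X_C' ⊆ O for every C' with C R^↑ C'. *)
Definition openXF (O : W * nat -> Prop) : Prop :=
  (forall p, O p -> carrierXF p) /\
  (* O ∩ X_C open in X_C (for degenerate C every subset is open) *)
  (forall w, R w w ->
     exists V, openY U (csize w) V /\
       forall y m, clust w y ->
         (O (y, m) <-> V (m, lab y))) /\
  (forall w y m m', O (w, m) -> R w y -> ~~ R y w ->
     carrierXF (y, m') -> O (y, m')).
End Frame.

(* Main.v *)
Require Import Defs.
From mathcomp Require Import all_boot.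
From Stdlib Require Import Classical.

Section Help.
Variable U : (nat -> Prop) -> Prop.
Hypothesis hU : nonprincipal_ultrafilter U.

Lemma U_ne A : U A -> exists x, A x.
Proof.
case: hU => [UT [Unf [Umono [Uint [Uult Unp]]]]] HA.
case: (classic (exists x, A x)) => // H; exfalso; apply: Unf.
apply: (Umono _ _ HA) => x Ax; apply: H; by exists x.
Qed.

Lemma Y1_full m : carrierY U 1 (m, 0).
Proof.
have hne := U_ne.
case: hU => [UT [Unf [Umono [Uint [Uult Unp]]]]].
split; first by [].
move=> [A [AX [Am [D [HD Hdis]]]]].
have HD0 := HD 0 isT. have HD1 := HD 1 isT.
case: (Uult (fun j => A (j,0))) => HA.
- have key : forall i, i < 2 -> U (fun j => D i (j,0)).
    move=> i hi. case: (Uult (fun j => D i (j,0))) => // HG.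
    exfalso. case: (HD i hi) => [[Dsub Ddense] _].
    have [j [Gj Aj]] := hne _ (Uint _ _ HG HA).
    pose O := fun p : nat*nat => p.2 = 0 /\ ~ D i (p.1,0) /\ A (p.1,0).
    have hO : openX U 1 O.
      split; first by move=> [a b] [/= -> _].
      right => k hk. have -> : k = 0 by case: k hk.
      split; last by exists j.
      left; apply: (Umono _ _ (Uint _ _ HG HA)) => x [h1 h2]; by split.
    have [[a b] [[/= Hb [HnD _]] HDx]] := Ddense O hO (ex_intro _ (j,0) (conj (conj erefl (conj Gj Aj)) Aj)).
    subst b; exact: HnD HDx.
  have [j [h0 h1]] := hne _ (Uint _ _ (key 0 isT) (key 1 isT)).
  by apply: (Hdis 0 1 isT isT _ (j,0)).
- case: HD0 => [[D0sub _] [[a b] Dab]].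
  have Aab := D0sub _ Dab.
  have b0 : b = 0 by move: (AX _ Aab); rewrite /carrierX /=; case: b {Dab Aab}.
  subst b.
  pose O := fun p : nat*nat => p.2 = 0 /\ (~ A (p.1,0) \/ p.1 = a).
  have hO : openX U 1 O.
    split; first by move=> [x y] [/= -> _].
    right => k hk. have -> : k = 0 by case: k hk.
    split; last by exists a; split => //; right.
    left; apply: (Umono _ _ HA) => x hx; split => //; by left.
  case: HD1 => [[D1sub D1dense] _].
  have [[j b] [[/= Hb Hj] HDx]] := D1dense O hO (ex_intro _ (a,0) (conj (conj erefl (or_intror erefl)) Aab)).
  subst b.
  have Aj := D1sub _ HDx.
  case: Hj => [Hj | E]; first by apply: Hj.
  rewrite /= in E; subst j.
  by apply: (Hdis 0 1 isT isT _ (a,0)).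
Qed.
End Help.

Section Frame2.
Variable W : finType.
Variable R : rel W.
Hypothesis Htr : transitive R.

Lemma exists_final w : exists w', final_cluster R w' /\
   (w' = w \/ (R w w' /\ ~~ R w' w)).
Proof.
move: {2}#|[pred z | R w z && ~~ R z w]| (leqnn #|[pred z | R w z && ~~ R z w]|) => N.
elim: N w => [|N IH] w HN.
- exists w; split; last by left.
  move=> y Rwy; rewrite /clust; case: (boolP (R y w)) => Ryw; first by rewrite Rwy orbT.
  exfalso. have : 0 < #|[pred z | R w z && ~~ R z w]|.
    by apply/card_gt0P; exists y; rewrite inE Rwy Ryw.
  by rewrite leqNgt in HN; rewrite (negbTE HN).
- case: (classic (final_cluster R w)) => Hf; first by exists w; split => //; left.
  have [y Hy] : exists y, R w y /\ ~ clust R w y.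
    apply: NNPP => H; apply: Hf => y Rwy; apply: NNPP => Hc; apply: H; by exists y.
  case: Hy => Rwy Hc.
  have Ryw : ~~ R y w.
    apply/negP => Ryw; apply: Hc; by rewrite /clust Rwy Ryw orbT.
  have Hlt : #|[pred z | R y z && ~~ R z y]| < #|[pred z | R w z && ~~ R z w]|.
    apply: proper_card; apply/properP; split.
      apply/subsetP => z; rewrite !inE => /andP [Ryz Nzy].
      rewrite (Htr _ _ _ Rwy Ryz) /=; apply/negP => Rzw; by rewrite (Htr _ _ _ Rzw Rwy) in Nzy.
    exists y; first by rewrite !inE Rwy Ryw.
    by rewrite !inE; case: (R y y).
  have [w' [Fw' Hw']] := IH y (leq_trans (leq_trans Hlt HN) (leqnn _)).
  - exists w'; split => //; right.
    case: Hw' => [-> | [Ryw' Nw'y]]; first by split.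
    split; first exact: Htr _ _ _ Rwy Ryw'.
    apply/negP => Rw'w; by rewrite (Htr _ _ _ Rw'w Rwy) in Nw'y.
Qed.
End Frame2.

Section Main.
Variable W : finType.
Variable R : rel W.
Variable U : (nat -> Prop) -> Prop.
Variable lab : W -> nat.
Hypothesis hU : nonprincipal_ultrafilter U.
Hypothesis Hlab : cluster_labelling R lab.

Variable w : W.
Hypothesis Fw : final_cluster R w.
Hypothesis Sw : simple_cluster R w.

Lemma cs1 : csize R w = 1.
Proof.
case: Sw => Rww sing.
rewrite /csize (eq_card (B := pred1 w)) ?card1 // => y; rewrite !inE.
apply/idP/eqP => [/sing // | ->]; by rewrite /clust eqxx.
Qed.

Lemma labw0 : lab w = 0.
Proof. case: Hlab => H _; case: Sw => Rww _; move: (H w Rww); rewrite cs1; by case: (lab w). Qed.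

Lemma carr m : carrierXF R U lab (w, m).
Proof.
case: Sw => Rww _; rewrite /carrierXF /= Rww cs1 labw0; exact: Y1_full.
Qed.

Lemma Q_open S : U S -> openXF R U lab (fun q => q.1 = w /\ S q.2).
Proof.
case: hU => [UT [Unf [Umono [Uint [Uult Unp]]]]] HS.
case: Sw => Rww sing.
split; first by move=> [y m] [/= -> _]; exact: carr.
split.
- move=> w' Rw'w'.
  case: (boolP (clust R w' w)) => Hc.
  + have ew : w' = w.
      apply: sing; move: Hc; rewrite /clust => /orP [/eqP -> | /andP [a b]].
        by rewrite eqxx.
      by rewrite a b orbT.
    subst w'.
    exists (fun p : nat * nat => p.2 = 0 /\ S p.1); split.
    * rewrite cs1; exists (fun p : nat * nat => p.2 = 0 /\ S p.1); split.
        split; first by move=> [a b] [/= -> _].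
        right => k hk; have -> : k = 0 by case: k hk.
        split; first by left; apply: (Umono _ _ HS) => x Sx; split.
        by have [x Sx] := U_ne _ hU _ HS; exists x; split.
      move=> [a b] /=; split.
        move=> [b0 Sa]; split => //; subst b; exact: Y1_full.
      by case.
    * move=> y m Hy; have ey := sing y Hy; subst y; rewrite labw0 /=; split; by case.
  + exists (fun _ => False); split.
      exists (fun _ => False); split; first by split; [move=> p [] | left; move=> p []].
      by move=> x; split => // [[]].
    move=> y m Hy /=; split => // [[ey _]]; subst y.
    apply: (negP Hc).
    move: Hy; rewrite /clust => /orP [/eqP -> | /andP [a b]]; by rewrite ?eqxx // a b orbT.
- move=> w1 y m m' [/= e1 _] Rwy Nyw _; subst w1.
  have := Fw y Rwy; rewrite /clust => /orP [/eqP ey | /andP [_ b]].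
    by subst y; rewrite Rww in Nyw.
  by rewrite b in Nyw.
Qed.
End Main.

Theorem lemma9 (U : (nat -> Prop) -> Prop) (n : nat) (W : finType) (R : rel W)
    (lab : W -> nat) :
  nonprincipal_ultrafilter U ->
  1 <= n ->
  transitive R ->
  circumference_le R n ->
  (forall w : W, final_cluster R w -> simple_cluster R w) ->
  cluster_labelling R lab ->
  openly_irresolvable (openXF R U lab) (carrierXF R U lab).
Proof.
move=> hU _ Htr _ Hfin Hlab V [O [HO HV]] [p Vp] [D [HD Hdis]].
have hU' := hU.
case: hU' => [UT [Unf [Umono [Uint [Uult Unp]]]]].
have [w [Fw Hw]] := exists_final W R Htr p.1.
have Sw := Hfin w Fw.
have Rww : R w w by case: Sw.
have carr' := carr W R U lab hU Hlab w Sw.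
have HVe : forall m, V (w, m) <-> O (w, m).
  move=> m; rewrite HV; split; [by case | move=> h; split => //; exact: carr'].
have Op : O p by case: (proj1 (HV p) Vp).
case: HO => [Osub [Ocl Oup]].
have HB : U (fun m => O (w, m)).
  case: Hw => [ew | [Rpw Nwp]].
  - case: p Vp Op ew => [w0 m0] /= Vp Op ew; subst w0.
    have [V' [hV' HV'e]] := Ocl w Rww.
    have cw : clust R w w by rewrite /clust eqxx.
    move: hV'; rewrite (cs1 W R w Sw) => [[O' [hO' HO']]].
    have V'm0 : V' (m0, 0) by rewrite -(labw0 W R lab Hlab w Sw); apply/HV'e.
    have O'm0 := proj1 (proj1 (HO' _) V'm0).
    case: hO' => _ [He | Hk]; first by exfalso; exact: He O'm0.
    case: (Hk 0 isT) => [[HU | He] _]; last by exfalso; exact: He m0 O'm0.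
    apply: (Umono _ _ HU) => m O'm.
    apply/(HV'e w m cw); rewrite (labw0 W R lab Hlab w Sw); apply/HO'; split => //; exact: (Y1_full U hU m).
  - apply: (Umono _ _ UT) => m _; case: p Op Rpw Nwp {Vp} => [a b] Op Rpw Nwp; exact: (Oup a w b m Op Rpw Nwp (carr' m)).
have key : forall i, i < 2 -> U (fun m => D i (w, m)).
  move=> i hi; case: (Uult (fun m => D i (w, m))) => // HG; exfalso.
  case: (HD i hi) => [[Dsub Ddense] _].
  have HQ := Q_open W R U lab hU Hlab w Fw Sw _ (Uint _ _ HG HB).
  have [m [Gm Bm]] := U_ne _ hU _ (Uint _ _ HG HB).
  have [[y k] [[/= ey [Gk _]] Dyk]] :=
    Ddense _ HQ (ex_intro _ (w, m) (conj (conj erefl (conj Gm Bm)) (proj2 (HVe m) Bm))).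
  subst y; exact: Gk Dyk.
have [m [h0 h1]] := U_ne _ hU _ (Uint _ _ (key 0 isT) (key 1 isT)).
by apply: (Hdis 0 1 isT isT _ (w, m)).
Qed.
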